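(* Consider the controlled SI optimal control problem described in the context, with one control per node ($M=N$) and given (fixed) initial conditions. Let $(\boldsymbol i^*(t), \boldsymbol\lambda^*(t), \boldsymbol u^*(t))$, $t\in[0,T]$, be an optimal state trajectory, its associated adjoint trajectory, and optimal controls satisfying the Pontryagin Maximum Principle conditions listed in the context. Then each optimal control $u_j^*(t)$, $1\le j\le N$, is a non-increasing function of $t$ on $[0,T]$.
   Context: Let $N\geq 1$, and let $\boldsymbol A=(A_{jk})$ be an $N\times N$ symmetric matrix with entries in $\{0,1\}$ (adjacency matrix of an undirected, unweighted network on nodes $1,\dots,N$). Fix $\beta>0$, a horizon $T>0$, and initial values $x_{0j}\in[0,1]$. Each node $j$ has its own control $u_j(t)$. The state $i_j(t)\in[0,1]$ (probability node $j$ is informed), with $s_j(t)=1-i_j(t)$, evolves by $\dot i_j(t)=\beta s_j(t)\sum_{k=1}^N A_{jk}i_k(t)+u_j(t)s_j(t)$, $i_j(0)=x_{0j}$, $1\le j\le N$. The objective to be maximized is $J=\frac1N\sum_{j=1}^N i_j(T)-\sum_{j=1}^N\int_0^T g_j(u_j(t))\,dt$, where each $g_j:\mathbb R\to\mathbb R$ is twice differentiable, strictly convex, even, increasing on $[0,\infty)$, and satisfies $g_j(0)=0$. The optimal controls are nonnegative: $u_j^*(t)\ge 0$. The Hamiltonian is $H(\boldsymbol i,\boldsymbol\lambda,\boldsymbol u)=-\sum_{j=1}^N g_j(u_j)+\sum_{l=1}^N\lambda_l\big(\beta s_l\sum_{k=1}^N A_{lk}i_k+u_l s_l\big)$ with $s_l=1-i_l$.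 The Pontryagin conditions are: $\boldsymbol i^*$ solves the state equations above; the adjoint variables satisfy $\dot\lambda_j^*(t)=-\beta\sum_{l=1}^N\lambda_l^*(t)s_l^*(t)A_{lj}+\beta\lambda_j^*(t)\sum_{k=1}^N A_{jk}i_k^*(t)+\lambda_j^*(t)u_j^*(t)$ with $\lambda_j^*(T)=1/N$; and for each $t$, $\boldsymbol u^*(t)$ maximizes $H(\boldsymbol i^*(t),\boldsymbol\lambda^*(t),\cdot)$, which gives $g_j'(u_j^*(t))=\lambda_j^*(t)s_j^*(t)$ for each $j$. *)

(* Defs.v *)
From Stdlib Require Import Reals.
From Coquelicot Require Import Coquelicot.
Open Scope R_scope.

Fixpoint rsum (n : nat) (f : nat -> R) : R :=
  match n with
  | O => 0
  | S m => rsum m f + f m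
  end.

Definition strictly_convex (g : R -> R) : Prop :=
  forall x y a, x <> y -> 0 < a < 1 ->
    g (a * x + (1 - a) * y) < a * g x + (1 - a) * g y.

Definition admissible_cost (g : R -> R) : Prop :=
  (forall x, ex_derive g x) /\
  (forall x, ex_derive (Derive g) x) /\
  strictly_convex g /\
  (forall x, g (- x) = g x) /\
  (forall x y, 0 <= x -> x <= y -> g x <= g y) /\
  g 0 = 0.

Definition hamiltonian (N : nat) (A : nat -> nat -> R) (beta : R)
    (g : nat -> R -> R) (i lam u : nat -> R) : R :=
  - rsum N (fun j => g j (u j))
  + rsum N (fun l => lam l * (beta * (1 - i l) * rsum N (fun k => A l k * i k)
                              + u l * (1 - i l))).

(* Main.v *)
Require Import Defs.
From Stdlib Require Import Reals Lra Lia.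
From Coquelicot Require Import Coquelicot.
Open Scope R_scope.

Lemma rsum_ext n f h : (forall k, (k < n)%nat -> f k = h k) -> rsum n f = rsum n h.
Proof.
induction n; intros H; simpl; [reflexivity|].
rewrite IHn by (intros; apply H; lia). rewrite (H n) by lia. reflexivity.
Qed.

Lemma rsum_nonneg n f : (forall k, (k < n)%nat -> 0 <= f k) -> 0 <= rsum n f.
Proof.
induction n; intros H; simpl; [lra|].
pose proof (H n ltac:(lia)). pose proof (IHn ltac:(intros; apply H; lia)). lra.
Qed.

Lemma rsum_diff n f h j : (j < n)%nat -> (forall k, (k < n)%nat -> k <> j -> f k = h k) ->
  rsum n f - rsum n h = f j - h j.
Proof.
induction n; intros Hj H; [lia|]. simpl.
destruct (Nat.eq_dec j n) as [->|Hne].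
- rewrite (rsum_ext n f h) by (intros; apply H; lia). ring.
- rewrite (H n) by lia.
  assert (E := IHn ltac:(lia) ltac:(intros; apply H; lia)). lra.
Qed.

Lemma deriv_even (g : R -> R) : (forall x, ex_derive g x) -> (forall x, g (- x) = g x) ->
  Derive g 0 = 0.
Proof.
intros Hd He.
assert (E : Derive g 0 = Derive (fun x => g (- x)) 0).
{ apply Derive_ext. intros; symmetry; apply He. }
rewrite (Derive_comp g (fun x => - x)) in E; [|apply Hd|auto_derive; auto].
assert (E2 : Derive (fun x => - x) 0 = -1).
{ apply is_derive_unique. auto_derive; auto; ring. }
rewrite E2, Ropp_0 in E. lra.
Qed.

Lemma cont_W (D : R -> Prop) (l i : R -> R) :
  continuous_on D l -> continuous_on D i -> continuous_on D (fun t => l t * (1 - i t)).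
Proof.
intros Hl Hi x Dx.
apply (filterlim_comp_2 (G:=locally (l x)) (H:=locally (1 + - i x)) l (fun t => 1 + - i t) Rmult).
- now apply Hl.
- apply (filterlim_comp_2 (G:=locally 1) (H:=locally (- i x)) (fun _ => 1) (fun t => - i t) Rplus).
  + apply filterlim_const.
  + apply (filterlim_comp _ _ _ i Ropp _ (locally (i x))); [now apply Hi|].
    apply (filterlim_Rbar_opp (Finite (i x))).
  + apply (filterlim_Rbar_plus (Finite 1) (Finite (- i x)) (Finite (1 + - i x))).
    reflexivity.
- apply (filterlim_Rbar_mult (Finite (l x)) (Finite (1 + - i x)) (Finite (l x * (1 + - i x)))).
  reflexivity.
Qed.

Lemma cont_eps (D : R -> Prop) (f : R -> R) x : continuous_on D f -> D x ->
  forall eps, 0 < eps -> exists d, 0 < d /\ forall y, Rabs (y - x) < d -> D y -> Rabs (f y - f x) < eps.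
Proof.
intros Hf Dx eps He.
specialize (Hf x Dx).
destruct (proj1 (filterlim_locally _ _) Hf (mkposreal eps He)) as [d Hd].
exists d. split; [apply cond_pos|].
intros y Hy Dy. apply (Hd y Hy Dy).
Qed.

Lemma mono (f df : R -> R) a b :
  (forall x, a < x < b -> is_derive f x (df x)) ->
  (forall x, a < x < b -> df x <= 0) ->
  continuous_on (fun t => a <= t <= b) f ->
  forall x y, a <= x -> x <= y -> y <= b -> f y <= f x.
Proof.
intros Hd Hneg Hc.
assert (Hin : forall x y, a < x -> x <= y -> y < b -> f y <= f x).
{ intros x y H1 H2 H3.
  destruct (MVT_gen f x y df) as [c [Hc1 Hc2]].
  - intros z Hz. rewrite Rmin_left in Hz by lra. rewrite Rmax_right in Hz by lra.
    apply Hd. lra.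
  - intros z Hz. rewrite Rmin_left in Hz by lra. rewrite Rmax_right in Hz by lra.
    apply continuity_pt_filterlim. apply (@ex_derive_continuous R_AbsRing R_NormedModule).
    eexists. apply Hd. lra.
  - rewrite Rmin_left in Hc1 by lra. rewrite Rmax_right in Hc1 by lra.
    assert (df c <= 0) by (apply Hneg; lra).
    assert (df c * (y - x) <= 0).
    { apply Rmult_le_0_r; lra. }
    lra. }
intros x y H1 H2 H3.
destruct (Req_dec x y) as [->|Hxy]; [lra|].
destruct (Rle_lt_dec (f y) (f x)) as [ok|bad]; [exact ok|exfalso].
set (eps := (f y - f x) / 2).
assert (He : 0 < eps) by (unfold eps; lra).
destruct (cont_eps _ f x Hc ltac:(lra) eps He) as [dx [Hdx Hx]].
destruct (cont_eps _ f y Hc ltac:(lra) eps He) as [dy [Hdy Hy]].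
set (h := Rmin dx (Rmin dy (y - x)) / 3).
assert (Hh0 : 0 < h).
{ unfold h. apply Rdiv_lt_0_compat; [|lra].
  apply Rmin_pos; [lra|apply Rmin_pos; lra]. }
assert (Hh1 : h < dx /\ h < dy /\ 2 * h < y - x).
{ unfold h. pose proof (Rmin_l dx (Rmin dy (y - x))).
  pose proof (Rmin_r dx (Rmin dy (y - x))).
  pose proof (Rmin_l dy (y - x)). pose proof (Rmin_r dy (y - x)). lra. }
assert (A1 := Hx (x + h) ltac:(rewrite Rabs_pos_eq; lra) ltac:(lra)).
assert (A2 := Hy (y - h) ltac:(rewrite Rabs_left; lra) ltac:(lra)).
assert (A3 := Hin (x + h) (y - h) ltac:(lra) ltac:(lra) ltac:(lra)).
apply Rabs_lt_between' in A1. apply Rabs_lt_between' in A2.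
unfold eps in *. lra.
Qed.

Theorem theorem1
  (N : nat) (HN : (1 <= N)%nat)
  (A : nat -> nat -> R)
  (HA01 : forall j k, (j < N)%nat -> (k < N)%nat -> A j k = 0 \/ A j k = 1)
  (HAsym : forall j k, (j < N)%nat -> (k < N)%nat -> A j k = A k j)
  (beta T : R) (Hbeta : 0 < beta) (HT : 0 < T)
  (x0 : nat -> R) (Hx0 : forall j, (j < N)%nat -> 0 <= x0 j <= 1)
  (g : nat -> R -> R) (Hg : forall j, (j < N)%nat -> admissible_cost (g j))
  (i lam u : nat -> R -> R)
  (Hi01 : forall j t, (j < N)%nat -> 0 <= t <= T -> 0 <= i j t <= 1)
  (Hu0 : forall j t, (j < N)%nat -> 0 <= t <= T -> 0 <= u j t)
  (Hicont : forall j, (j < N)%nat -> continuous_on (fun t => 0 <= t <= T) (i j))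
  (Hlcont : forall j, (j < N)%nat -> continuous_on (fun t => 0 <= t <= T) (lam j))
  (Hstate : forall j t, (j < N)%nat -> 0 < t < T ->
     is_derive (i j) t
       (beta * (1 - i j t) * rsum N (fun k => A j k * i k t) + u j t * (1 - i j t)))
  (Hinit : forall j, (j < N)%nat -> i j 0 = x0 j)
  (Hadj : forall j t, (j < N)%nat -> 0 < t < T ->
     is_derive (lam j) t
       (- beta * rsum N (fun l => lam l t * (1 - i l t) * A l j)
        + beta * lam j t * rsum N (fun k => A j k * i k t)
        + lam j t * u j t))
  (Hterm : forall j, (j < N)%nat -> lam j T = 1 / INR N)
  (Hmax : forall t, 0 <= t <= T -> forall v : nat -> R,
     hamiltonian N A beta g (fun k => i k t) (fun k => lam k t) v
     <= hamiltonian N A beta g (fun k => i k t) (fun k => lam k t) (fun k => u k t))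
  (Hfoc : forall j t, (j < N)%nat -> 0 <= t <= T ->
     Derive (g j) (u j t) = lam j t * (1 - i j t)) :
  forall j, (j < N)%nat ->
    forall t1 t2, 0 <= t1 -> t1 <= t2 -> t2 <= T -> u j t2 <= u j t1.
Proof.
(* subgradient inequality from maximization of the Hamiltonian *)
assert (SG : forall j t x, (j < N)%nat -> 0 <= t <= T ->
  lam j t * (1 - i j t) * (x - u j t) <= g j x - g j (u j t)).
{ intros j t x Hj Ht.
  pose (v := fun k => if Nat.eq_dec k j then x else u k t).
  assert (Hm := Hmax t Ht v). unfold hamiltonian in Hm. cbv beta in Hm.
  assert (E1 : rsum N (fun k => g k (v k)) - rsum N (fun k => g k (u k t)) = g j x - g j (u j t)).
  { rewrite (rsum_diff N _ _ j Hj).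
    - unfold v. destruct (Nat.eq_dec j j); [reflexivity|congruence].
    - intros k Hk Hkj. unfold v. destruct (Nat.eq_dec k j); [congruence|reflexivity]. }
  assert (E2 : rsum N (fun l => lam l t * (beta * (1 - i l t) * rsum N (fun k => A l k * i k t) + v l * (1 - i l t)))
     - rsum N (fun l => lam l t * (beta * (1 - i l t) * rsum N (fun k => A l k * i k t) + u l t * (1 - i l t)))
     = lam j t * (1 - i j t) * (x - u j t)).
  { rewrite (rsum_diff N _ _ j Hj).
    - unfold v. destruct (Nat.eq_dec j j); [ring|congruence].
    - intros k Hk Hkj. unfold v. destruct (Nat.eq_dec k j); [congruence|reflexivity]. }
  lra. }
assert (Wpos : forall l t, (l < N)%nat -> 0 <= t <= T -> 0 <= lam l t * (1 - i l t)).
{ intros l t Hl Ht.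
  destruct (Hg l Hl) as [Hd1 [_ [_ [Hev [Hmon Hg0]]]]].
  pose proof (Hu0 l t Hl Ht) as Hu.
  destruct (Req_dec (u l t) 0) as [Hz|Hnz].
  - rewrite <- (Hfoc l t Hl Ht), Hz. rewrite (deriv_even (g l) Hd1 Hev). lra.
  - assert (S := SG l t 0 Hl Ht).
    assert (g l 0 <= g l (u l t)) by (apply Hmon; lra).
    nra. }
intros j Hj t1 t2 H1 H2 H3.
set (W := fun t => lam j t * (1 - i j t)).
set (df := fun t => - beta * rsum N (fun l => lam l t * (1 - i l t) * A l j) * (1 - i j t)).
assert (Hmono : W t2 <= W t1).
{ apply (mono W df 0 T); try lra.
  - intros t Ht.
    assert (Hm := is_derive_mult (lam j) (fun s => minus 1 (i j s)) t _ _ (Hadj j t Hj Ht)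
        (is_derive_minus _ _ t _ _ (is_derive_const 1 t) (Hstate j t Hj Ht)) Rmult_comm).
    unfold W, df. unfold plus, mult, minus, opp, zero in Hm; simpl in Hm.
    unfold minus, plus, opp in Hm; simpl in Hm.
    match type of Hm with is_derive _ _ ?d => match goal with |- is_derive _ _ ?e => replace e with d by (unfold Rminus; ring); exact Hm end end.
  - intros t Ht. unfold df.
    assert (0 <= rsum N (fun l => lam l t * (1 - i l t) * A l j)).
    { apply rsum_nonneg. intros l Hl.
      apply Rmult_le_pos; [apply Wpos; [exact Hl|lra]|].
      destruct (HA01 l j Hl Hj) as [-> | ->]; lra. }
    pose proof (Hi01 j t Hj ltac:(lra)).
    assert (0 <= beta * rsum N (fun l => lam l t * (1 - i l t) * A l j) * (1 - i j t)) by (apply Rmult_le_pos; [apply Rmult_le_pos|]; lra).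
    match goal with |- ?a <= _ => replace a with (- (beta * rsum N (fun l => lam l t * (1 - i l t) * A l j) * (1 - i j t))) by ring end. lra.
  - apply cont_W; auto. }
unfold W in Hmono.
destruct (Rle_lt_dec (u j t2) (u j t1)) as [ok|bad]; [exact ok|exfalso].
set (u1 := u j t1) in *. set (u2 := u j t2) in *.
set (w1 := lam j t1 * (1 - i j t1)) in *. set (w2 := lam j t2 * (1 - i j t2)) in *.
assert (A1 := SG j t1 u2 Hj ltac:(lra)). fold u1 w1 in A1.
assert (A2 := SG j t2 u1 Hj ltac:(lra)). fold u2 w2 in A2.
assert (A3 := SG j t1 (/2 * u1 + (1 - /2) * u2) Hj ltac:(lra)). fold u1 w1 in A3.
destruct (Hg j Hj) as [_ [_ [Hsc _]]].
assert (A4 := Hsc u1 u2 (/2) ltac:(lra) ltac:(lra)).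
assert (A5 : w2 * (u2 - u1) <= w1 * (u2 - u1)) by (apply Rmult_le_compat_r; lra).
lra.
Qed.
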